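(* Assume $f$ satisfies Hypothesis 2 (see context) and let $\xi,\xi_\eta$ be as defined in the context. Then for each $\eta\in(0,1]$ and all $s\in(0,+\infty)$: \[ |\xi_\eta(s)|\le|\xi(s)|,\qquad |\xi_\eta'(s)|\le\frac{|\xi(s)|}{s}+\frac{1}{s^2f''(s)}+\frac{2\eta|\xi(s)|}{s^2f''(s)}, \] \[ |\xi_\eta''(s)f''(s)s^2|\le2\eta|\xi_\eta'(s)|+(1+2\eta|\xi(s)|)\,\big|(\log(f''(s)s))'\big|. \]
   Context: Hypothesis 2 on $f\colon(0,\infty)\to\mathbb{R}$: (I1) $f\in C^{4,\beta}_{loc}(0,\infty)$ for some $\beta\in(0,1]$, $f''>0$; (I2) $\frac{1}{\alpha\kappa}s^\alpha\le s^2f''(s)$ for $s>0$, with $\alpha\in(0,1)$, $\kappa>0$; (I3) $|sf'''(s)/f''(s)|\le\kappa$ for $s>0$; (I4) there is $\mathcal{K}_{\inf}>0$ with $\int_\Omega f(\mu)\,dx>-\mathcal{K}_{\inf}$ for all $\mu\in\mathscr{P}^{ac}(\Omega)$, $\Omega=(0,L)$. Define $\xi(s)=-s\int_s^\infty\frac{dy}{y^3f''(y)}$ and, for $\eta\in(0,1]$, $\xi_\eta(s)=-s\exp\!\big(\int_0^s\frac{2\eta}{y^2f''(y)}dy\big)\int_s^\infty\exp\!\big(-\int_0^y\frac{2\eta}{z^2f''(z)}dz\big)\frac{dy}{y^3f''(y)}$. *)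

(* Defs.v *)
From HB Require Import structures.
From mathcomp Require Import all_boot all_order all_algebra.
From mathcomp Require Import all_classical all_reals all_analysis.
Set Implicit Arguments. Unset Strict Implicit. Unset Printing Implicit Defensive.
Import Order.TTheory GRing.Theory Num.Theory.
Import numFieldNormedType.Exports.
Local Open Scope classical_set_scope.
Local Open Scope ring_scope.

Section Defs.
Variable R : realType.
Local Notation mu := (@lebesgue_measure R).

Definition d2 (f : R -> R) : R -> R := derive1n 2 f.

Definition holder_loc_pos (g : R -> R) (beta : R) : Prop :=
  forall a b : R, 0 < a -> a <= b ->
  exists C : R, forall x y : R, a <= x <= b -> a <= y <= b ->
    `|g x - g y| <= C * (`|x - y| `^ beta).

Definition C4beta_loc (f : R -> R) (beta : R) : Prop :=
  (forall k : nat, (k < 4)%N -> forall x : R, 0 < x -> derivable (derive1n k f) x 1)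
  /\ holder_loc_pos (derive1n 4 f) beta.

Definition Omega (L : R) : set R := `]0, L[%classic.

Definition hypothesis2 (f : R -> R) (beta alpha kappa L Kinf : R) : Prop :=
  [/\ (0 < beta <= 1) /\ C4beta_loc f beta /\ (forall s : R, 0 < s -> 0 < d2 f s),
      (forall s : R, 0 < s -> (alpha * kappa)^-1 * (s `^ alpha) <= s ^+ 2 * d2 f s),
      (forall s : R, 0 < s -> `|s * derive1n 3 f s / d2 f s| <= kappa) &
      (0 < Kinf /\
       forall rho : R -> R,
         measurable_fun (Omega L) rho ->
         (forall x : R, 0 < x < L -> 0 < rho x) ->
         ((\int[mu]_(x in Omega L) (rho x)%:E)%E = 1%E) ->
         ((- Kinf)%:E < \int[mu]_(x in Omega L) (f (rho x))%:E)%E)].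

Definition xi (f : R -> R) (s : R) : R :=
  - s * Rintegral mu `]s, +oo[%classic (fun y => (y ^+ 3 * d2 f y)^-1).

Definition Phi (f : R -> R) (eta s : R) : R :=
  Rintegral mu `]0, s[%classic (fun y => 2 * eta / (y ^+ 2 * d2 f y)).

Definition xi_eta (f : R -> R) (eta s : R) : R :=
  - s * expR (Phi f eta s) *
  Rintegral mu `]s, +oo[%classic (fun y => expR (- Phi f eta y) / (y ^+ 3 * d2 f y)).

End Defs.

(* Main.v *)
Require Import Defs.
From HB Require Import structures.
From mathcomp Require Import all_boot all_order all_algebra.
From mathcomp Require Import all_classical all_reals all_analysis.
From mathcomp Require Import measurable_realfun.
From mathcomp.algebra_tactics Require Import ring lra.
Import Order.TTheory GRing.Theory Num.Theory.
Import numFieldNormedType.Exports.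
Local Open Scope classical_set_scope.
Local Open Scope ring_scope.

Section Aux.
Context {R : realType}.
Local Notation mu := (@lebesgue_measure R).

Lemma der_cont (f : R -> R) x : derivable f x 1 -> {for x, continuous f}.
Proof. by move=> /derivable1_diffP /differentiable_continuous. Qed.

Lemma open_pos : open [set x : R | 0 < x].
Proof.
have := @interval_open R (BRight 0) (BInfty _ false) erefl erefl.
by congr open; apply/seteqP; split => x /=; rewrite in_itv /= andbT.
Qed.

Lemma int_bound (p P : R -> R) (A : set R) (lo hi : nat -> R) (M : R) :
  measurable A -> A `<=` [set x | 0 < x] ->
  (forall y : R, 0 < y -> 0 <= p y) ->
  (forall y : R, 0 < y -> {for y, continuous p}) ->
  (forall y : R, 0 < y -> is_derive y 1 P (p y)) ->
  (forall n, 0 < lo n) -> (forall n, lo n < hi n) ->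
  nondecreasing_seq (fun n => `[lo n, hi n]%classic) ->
  \bigcup_n `[lo n, hi n]%classic = A ->
  (forall n, P (hi n) - P (lo n) <= M) ->
  mu.-integrable A (EFin \o p).
Proof.
move=> mA Apos p0 pc Pd lo0 lohi nd UA PM.
have mpos : measurable [set x : R | 0 < x] by exact: open_measurable open_pos.
have mp : measurable_fun [set x : R | 0 < x] p.
  apply: open_continuous_measurable_fun; first exact: open_pos.
  by move=> y; rewrite inE /=; exact: pc.
apply/integrableP; split.
  by apply/measurable_EFinP; exact: (measurable_funS mpos Apos mp).
have int_n n : (\int[mu]_(x in `[lo n, hi n]) (p x)%:E = (P (hi n))%:E - (P (lo n))%:E)%E.
  apply: (continuous_FTC2 (lohi n)).
  - apply: continuous_in_subspaceT => y; rewrite inE /= in_itv /= => /andP[ly _].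
    by apply: pc; exact: lt_le_trans ly.
  - split.
    + move=> y; rewrite in_itv /= => /andP[ly _].
      by have [] := Pd y (lt_trans (lo0 n) ly).
    + apply: cvg_at_right_filter; apply: der_cont.
      by have [] := Pd _ (lo0 n).
    + apply: cvg_at_left_filter; apply: der_cont.
      by have [] := Pd _ (lt_trans (lo0 n) (lohi n)).
  - move=> y; rewrite in_itv /= => /andP[ly _].
    have [_ <-] := Pd y (lt_trans (lo0 n) ly).
    by rewrite derive1E.
have mfn : forall n, measurable_fun `[lo n, hi n]%classic (EFin \o p).
  move=> n; apply/measurable_EFinP; apply: (measurable_funS mpos _ mp) => //.
  move=> y /=; rewrite in_itv /= => /andP[ly _]; exact: lt_le_trans ly.
have f0n : forall n x, `[lo n, hi n]%classic x -> (0 <= (EFin \o p) x)%E.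
  move=> n x /=; rewrite in_itv /= => /andP[ly _]; rewrite lee_fin; apply: p0.
  exact: lt_le_trans ly.
have cv := @ge0_nondecreasing_set_cvg_integral _ (measurableTypeR R) R (fun n => `[lo n, hi n]%classic)
   (EFin \o p) lebesgue_measure nd (fun n => measurable_itv _) mfn f0n.
rewrite (_ : (\int[mu]_(x in A) `|(EFin \o p) x|)%E = (\int[mu]_(x in A) (p x)%:E)%E); last first.
  apply: eq_integral => x; rewrite inE => Ax /=.
  by rewrite /= ger0_norm //; apply: p0; exact: Apos.
rewrite -UA.
apply: (@le_lt_trans _ _ (M%:E)); last exact: ltry.
rewrite -(cvg_lim _ cv) //.
apply: lime_le; first by apply/cvg_ex; eexists; exact: cv.
apply: nearW => n /=; rewrite int_n -EFinB lee_fin; exact: PM.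
Qed.


Lemma int_pow0 (al s : R) : 0 < al < 1 -> 0 < s ->
  mu.-integrable `]0, s]%classic (EFin \o (fun y => y `^ (- al))).
Proof.
move=> /andP[a0 a1] s0.
have a1' : 0 < 1 - al by rewrite subr_gt0.
pose P y := (1 - al)^-1 * y `^ (1 - al).
apply: (@int_bound _ P _ (fun n => s / (n.+2)%:R) (fun=> s) (P s)).
- exact: measurable_itv.
- by move=> y /=; rewrite in_itv /= => /andP[].
- by move=> y y0; rewrite powR_ge0.
- move=> y y0; apply: der_cont.
  by have [] := is_derive1_powR (- al) y0.
- move=> y y0; apply: is_derive_eq.
  have := is_derive1_powR (1 - al) y0 => H.
  exact: is_deriveZ.
  rewrite /= -/(GRing.scale _ _) /GRing.scale /=.
  by rewrite mulrA mulVf ?gt_eqF // mul1r addrAC subrr add0r.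
- by move=> n; rewrite divr_gt0.
- move=> n; rewrite ltr_pdivrMr // ltr_pMr // ltr1n //.
- apply/nondecreasing_seqP => n; rewrite subsetEset => y /=.
  rewrite !in_itv /= => /andP[ly ->]; rewrite andbT (le_trans _ ly) //.
  by rewrite ler_pM2l // lef_pV2 ?posrE // ler_nat.
- apply/seteqP; split => y /=.
    move=> [n _]; rewrite /= !in_itv /= => /andP[ly ->]; rewrite andbT.
    by apply: (lt_le_trans _ ly); rewrite divr_gt0.
  rewrite in_itv /= => /andP[y0 ys].
  exists (Num.truncn (s / y)) => //=; rewrite in_itv /= ys andbT.
  rewrite ler_pdivrMr ?ltr0n // -ler_pdivrMl //.
  apply: ltW; apply: (lt_le_trans (truncnS_gt _)).
  by rewrite mulrC ler_nat.
- move=> n; rewrite lerBlDr lerDl /P mulr_ge0 // ?powR_ge0 //.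
  by rewrite invr_ge0 ltW.
Qed.


Lemma int_powy (al s : R) : 0 < al -> 0 < s ->
  mu.-integrable `[s, +oo[%classic (EFin \o (fun y => y `^ (- al - 1))).
Proof.
move=> a0 s0.
pose P y := - al^-1 * y `^ (- al).
apply: (@int_bound _ P _ (fun=> s) (fun n => s + (n.+1)%:R) (- P s)).
- exact: measurable_itv.
- move=> y /=; rewrite in_itv /= andbT => sy; exact: lt_le_trans sy.
- by move=> y y0; rewrite powR_ge0.
- move=> y y0; apply: der_cont.
  by have [] := is_derive1_powR (- al - 1) y0.
- move=> y y0; apply: is_derive_eq.
  have := is_derive1_powR (- al) y0 => H.
  exact: is_deriveZ.
  rewrite /= -/(GRing.scale _ _) /GRing.scale /=.
  by rewrite mulrA mulNr mulrN opprK mulVf ?gt_eqF // mul1r.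
- by [].
- by move=> n; rewrite ltrDl.
- apply/nondecreasing_seqP => n; rewrite subsetEset => y /=.
  rewrite !in_itv /= => /andP[-> ly] /=; rewrite (le_trans ly) //.
  by rewrite lerD2l ler_nat.
- apply/seteqP; split => y /=.
    move=> [n _]; rewrite /= !in_itv /= => /andP[-> _] //.
  rewrite in_itv /= andbT => sy.
  exists (Num.truncn y) => //=; rewrite in_itv /= sy /=.
  apply: ltW; apply: (lt_le_trans (truncnS_gt _)).
  by rewrite lerDr ltW.
- move=> n; rewrite -[X in _ <= X]add0r lerD2r /P mulNr oppr_le0.
  by apply: mulr_ge0; rewrite ?invr_ge0 ?powR_ge0 // ltW.
Qed.


Lemma is_derive_int_cc (k : R -> R) (c t : R) : c < t ->
  (forall y, c < y -> {for y, continuous k}) ->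
  mu.-integrable `[c, t + 1]%classic (EFin \o k) ->
  is_derive t 1 (fun x => \int[mu]_(u in `[c, x]) k u) (k t).
Proof.
move=> ct kc ik.
have [d1 d2] := @continuous_FTC1_closed R k c t (t + 1) (ltr_pwDr ltr01 (lexx t)) ik ct (kc _ ct).
by apply: DeriveDef => //; rewrite -derive1E.
Qed.

Lemma is_derive_int_oo (k : R -> R) (t : R) : 0 < t ->
  (forall y, 0 < y -> {for y, continuous k}) ->
  (forall x, 0 < x -> mu.-integrable `]0, x[%classic (EFin \o k)) ->
  is_derive t 1 (fun x => \int[mu]_(u in `]0, x[) k u) (k t).
Proof.
move=> t0 kc ik.
set c := t / 2.
have c0 : 0 < c by rewrite divr_gt0.
have ct : c < t by rewrite /c ltr_pdivrMr // ltr_pMr // ltr1n.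
have ik2 : mu.-integrable `[c, t + 1]%classic (EFin \o k).
  apply: integrableS (ik (t + 2) _) => //.
    move=> y /=; rewrite !in_itv /= => /andP[cy yt]; rewrite (lt_le_trans c0 cy) /=.
    by rewrite (le_lt_trans yt) // ltrD2l ltr1n.
  by rewrite addr_gt0.
have D := @is_derive_int_cc k c t ct (fun y cy => kc y (lt_trans c0 cy)) ik2.
apply: (@near_eq_is_derive _ _ _
   (cst (\int[mu]_(u in `]0, c]) k u) + (fun x => \int[mu]_(u in `[c, x]) k u))).
  near=> x.
  have cx : c < x by near: x; exact: lt_nbhsr.
  have x0 : 0 < x := lt_trans c0 cx.
  have := @Rintegral_itvB R k (BRight 0) (BLeft x) c (ik x x0).
  rewrite !bnd_simp => /(_ (ltW c0) cx) E.
  rewrite !fctE /=.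
  rewrite -(@Rintegral_itv_bndo_bndc R (BLeft c) x k); last first.
    apply: integrableS (ik x x0) => //; move=> y /=; rewrite !in_itv /= => /andP[cy yx].
    by rewrite yx andbT (lt_le_trans c0 cy).
  rewrite -(@Rintegral_itv_obnd_cbnd R c (BLeft x) k); last first.
    apply: integrableS (ik x x0) => //; move=> y /=; rewrite !in_itv /= => /andP[cy yx].
    by rewrite yx andbT (lt_trans c0 cy).
  by rewrite /= -E addrC subrK.
apply: (is_derive_eq (is_deriveD (is_derive_cst _ _ _) D)).
by rewrite add0r.
Unshelve. all: by end_near.
Qed.

Lemma is_derive_int_oy (k : R -> R) (t : R) : 0 < t ->
  (forall y, 0 < y -> {for y, continuous k}) ->
  (forall x, 0 < x -> mu.-integrable `]x, +oo[%classic (EFin \o k)) ->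
  is_derive t 1 (fun x => \int[mu]_(u in `]x, +oo[) k u) (- k t).
Proof.
move=> t0 kc ik.
set c := t / 2.
have c0 : 0 < c by rewrite divr_gt0.
have ct : c < t by rewrite /c ltr_pdivrMr // ltr_pMr // ltr1n.
have ik2 : mu.-integrable `[c, t + 1]%classic (EFin \o k).
  apply: integrableS (ik (c / 2) _) => //.
    move=> y /=; rewrite !in_itv /= => /andP[cy _]; rewrite andbT.
    by apply: lt_le_trans cy; rewrite ltr_pdivrMr // ltr_pMr // ltr1n.
  by rewrite divr_gt0.
have D := @is_derive_int_cc k c t ct (fun y cy => kc y (lt_trans c0 cy)) ik2.
apply: (@near_eq_is_derive _ _ _
   (cst (\int[mu]_(u in `]c, +oo[) k u) - (fun x => \int[mu]_(u in `[c, x]) k u))).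
  near=> x.
  have cx : c < x by near: x; exact: lt_nbhsr.
  have := @Rintegral_itvB R k (BRight c) (BInfty _ false) x (ik c c0).
  rewrite !bnd_simp => /(_ (ltW cx) isT) <-; rewrite !fctE /=.
  rewrite (@Rintegral_itv_obnd_cbnd R c (BRight x) k) //.
  apply: integrableS (ik c c0) => //; move=> y /=; rewrite !in_itv /= => /andP[-> _] //.
apply: (is_derive_eq (is_deriveB (is_derive_cst _ _ _) D)).
by rewrite sub0r.
Unshelve. all: by end_near.
Qed.

End Aux.
Section D.
Context {R : realType}.
Implicit Types (f g : R -> R) (x df dg : R).

Lemma isdM {f g x df dg} : is_derive x 1 f df -> is_derive x 1 g dg ->
  is_derive x 1 (fun y => f y * g y) (f x * dg + g x * df).
Proof. by move=> F G; have := is_deriveM F G. Qed.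

Lemma isdD {f g x df dg} : is_derive x 1 f df -> is_derive x 1 g dg ->
  is_derive x 1 (fun y => f y + g y) (df + dg).
Proof. by move=> F G; have := is_deriveD F G. Qed.

Lemma isdN {f x df} : is_derive x 1 f df ->
  is_derive x 1 (fun y => - f y) (- df).
Proof. by move=> F; have := is_deriveN F. Qed.

Lemma isdV {f x df} : f x != 0 -> is_derive x 1 f df ->
  is_derive x 1 (fun y => (f y)^-1) (- (f x) ^- 2 * df).
Proof. by move=> fx F; have := is_deriveV fx F. Qed.

Lemma isdC {f x df} : is_derive x 1 f df -> forall g dg, is_derive (f x) 1 g dg ->
  is_derive x 1 (fun y => g (f y)) (dg * df).
Proof. by move=> F g dg G; have := is_derive1_comp G F. Qed.

Lemma isd_id x : is_derive x 1 (fun y : R => y) 1.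
Proof. exact: is_derive_id. Qed.

Lemma isd_cst (k : R) x : is_derive x 1 (fun _ : R => k) 0.
Proof. exact: is_derive_cst. Qed.

Lemma isdX {f x df} n : is_derive x 1 f df ->
  is_derive x 1 (fun y => f y ^+ n) (n%:R * f x ^+ n.-1 * df).
Proof.
move=> F; have := is_deriveX n F.
by rewrite exprfctE /GRing.scale /=.
Qed.

Lemma isd_der {f x} : derivable f x 1 -> is_derive x 1 f (derive1 f x).
Proof. by move=> /derivableP; rewrite derive1E. Qed.

Lemma isd_derive1 {f x df} : is_derive x 1 f df -> derive1 f x = df.
Proof. by move=> F; rewrite derive1E; exact: derive_val. Qed.

End D.

Section Main.
Context {R : realType}.
Local Notation mu := (@lebesgue_measure R).
Variables (f : R -> R) (c al eta : R).
Local Notation g := (d2 f).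
Hypotheses (c0 : 0 < c) (al0 : 0 < al) (al1 : al < 1) (eta0 : 0 < eta).
Hypothesis gpos : forall y : R, 0 < y -> 0 < g y.
Hypothesis gder : forall y : R, 0 < y -> derivable g y 1.
Hypothesis gbd : forall y : R, 0 < y -> c * y `^ al <= y ^+ 2 * g y.

Lemma q_der {y : R} : 0 < y -> is_derive y 1 (fun t : R => (t ^+ 2 * g t)^-1)
  (- (y ^+ 2 * g y) ^- 2 * (y ^+ 2 * derive1 g y + 2 * y * g y)).
Proof.
move=> y0.
have H2 : is_derive y 1 (fun t : R => t ^+ 2) (2 * y).
  apply: (is_derive_eq (isdX 2 (isd_id y))).
  by rewrite /= expr1 mulr1.
have := isdV _ (isdM H2 (isd_der (gder y y0))).
rewrite mulf_neq0 ?expf_neq0 ?gt_eqF ?gpos // => /(_ isT) H.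
apply: (is_derive_eq H).
by rewrite [g y * _]mulrC.
Qed.

Lemma q_cont {y : R} : 0 < y -> {for y, continuous (fun t : R => (t ^+ 2 * g t)^-1)}.
Proof. by move=> y0; apply: der_cont; have [] := q_der y0. Qed.

Lemma q_gt0 {y : R} : 0 < y -> 0 < (y ^+ 2 * g y)^-1.
Proof. by move=> y0; rewrite invr_gt0 mulr_gt0 ?exprn_gt0 ?gpos. Qed.

Lemma q_le {y : R} : 0 < y -> (y ^+ 2 * g y)^-1 <= c^-1 * y `^ (- al).
Proof.
move=> y0; rewrite powRN -invfM lef_pV2 ?posrE ?mulr_gt0 ?exprn_gt0 ?gpos ?powR_gt0 //.
exact: gbd.
Qed.

Lemma mpos : measurable [set x : R | 0 < x].
Proof. exact: open_measurable open_pos. Qed.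

Lemma meas_pos (k : R -> R) (A : set R) : A `<=` [set x | 0 < x] ->
  (forall y : R, 0 < y -> {for y, continuous k}) -> measurable_fun A (EFin \o k).
Proof.
move=> Ap kc; apply/measurable_EFinP; apply: (measurable_funS mpos Ap).
apply: open_continuous_measurable_fun; first exact: open_pos.
by move=> y; rewrite inE /=; exact: kc.
Qed.

Lemma q_int {x : R} : 0 < x ->
  mu.-integrable `]0, x[%classic (EFin \o (fun t : R => (t ^+ 2 * g t)^-1)).
Proof.
move=> x0.
have ip0 : mu.-integrable `]0, x[%classic (EFin \o (fun y : R => y `^ (- al))).
  have alb : 0 < al < 1 by rewrite al0 al1.
  apply: integrableS (@int_pow0 R al x alb x0) => //.
  by move=> y /=; rewrite !in_itv /= => /andP[-> /ltW].
apply: le_integrable (integrableZl _ (c^-1) ip0); first exact: measurable_itv.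
- apply: meas_pos; last by move=> y y0; apply: q_cont.
  by move=> y /=; rewrite in_itv /= => /andP[].
- move=> y /=; rewrite in_itv /= => /andP[y0 _].
  rewrite lee_fin ger0_norm; last exact: ltW (q_gt0 y0).
  rewrite ger0_norm; last first.
    by apply: mulr_ge0; [rewrite invr_ge0 ltW | exact: powR_ge0].
  exact: q_le y0.
- exact: measurable_itv.
Qed.


Lemma b_eq : (fun t : R => (t ^+ 3 * g t)^-1) = (fun t : R => t^-1 * (t ^+ 2 * g t)^-1).
Proof. by apply/funext => t; rewrite exprS -mulrA invfM. Qed.

Lemma b_der {y : R} : 0 < y -> derivable (fun t : R => (t ^+ 3 * g t)^-1) y 1.
Proof.
move=> y0; rewrite b_eq.
have yn0 : (fun t : R => t) y != 0 by rewrite gt_eqF.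
have [] := isdM (isdV yn0 (isd_id y)) (q_der y0); done.
Qed.

Lemma b_cont {y : R} : 0 < y -> {for y, continuous (fun t : R => (t ^+ 3 * g t)^-1)}.
Proof. by move=> y0; apply: der_cont; exact: b_der. Qed.

Lemma b_gt0 {y : R} : 0 < y -> 0 < (y ^+ 3 * g y)^-1.
Proof. by move=> y0; rewrite invr_gt0 mulr_gt0 ?exprn_gt0 ?gpos. Qed.

Lemma b_le {y : R} : 0 < y -> (y ^+ 3 * g y)^-1 <= c^-1 * y `^ (- al - 1).
Proof.
move=> y0.
have -> : (y ^+ 3 * g y)^-1 = y^-1 * (y ^+ 2 * g y)^-1.
  by have := congr1 (fun F => F y) b_eq.
have -> : y `^ (- al - 1) = y `^ (- al) / y.
  rewrite powRB; first by rewrite powRr1 // ltW.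
  by rewrite (gt_eqF y0) implybT.
rewrite mulrC [X in _ <= X]mulrA ler_pM2r ?invr_gt0 //; exact: q_le y0.
Qed.

Lemma b_int {x : R} : 0 < x ->
  mu.-integrable `]x, +oo[%classic (EFin \o (fun t : R => (t ^+ 3 * g t)^-1)).
Proof.
move=> x0.
have ip0 : mu.-integrable `]x, +oo[%classic (EFin \o (fun y : R => y `^ (- al - 1))).
  apply: integrableS (@int_powy R al x al0 x0) => //.
  by move=> y /=; rewrite !in_itv /= !andbT => /ltW.
apply: le_integrable (integrableZl _ (c^-1) ip0); first exact: measurable_itv.
- apply: meas_pos; last by move=> y y0; apply: b_cont.
  by move=> y /=; rewrite in_itv /= andbT => /(lt_trans x0).
- move=> y /=; rewrite in_itv /= andbT => xy.
  have y0 := lt_trans x0 xy.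
  rewrite lee_fin ger0_norm; last exact: ltW (b_gt0 y0).
  rewrite ger0_norm; last first.
    by apply: mulr_ge0; [rewrite invr_ge0 ltW | exact: powR_ge0].
  exact: b_le y0.
- exact: measurable_itv.
Qed.

Definition aa (y : R) := 2 * eta / (y ^+ 2 * g y).

Lemma a_der {y : R} : 0 < y -> derivable aa y 1.
Proof.
by move=> y0; have [] := isdM (isd_cst (2 * eta) y) (q_der y0).
Qed.

Lemma a_cont {y : R} : 0 < y -> {for y, continuous aa}.
Proof. by move=> y0; apply: der_cont; exact: a_der. Qed.

Lemma a_ge0 {y : R} : 0 < y -> 0 <= aa y.
Proof.
move=> y0; rewrite /aa; apply: mulr_ge0; last exact: ltW (q_gt0 y0).
by apply: mulr_ge0 => //; exact: ltW.
Qed.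

Lemma a_int {x : R} : 0 < x -> mu.-integrable `]0, x[%classic (EFin \o aa).
Proof.
move=> x0.
apply: le_integrable (integrableZl _ (2 * eta) (q_int x0)); first exact: measurable_itv.
- apply: meas_pos; last by move=> y y0; apply: a_cont.
  by move=> y /=; rewrite in_itv /= => /andP[].
- by move=> y _; exact: lexx.
- exact: measurable_itv.
Qed.

Lemma Phi_der {t : R} : 0 < t -> is_derive t 1 (Phi f eta) (aa t).
Proof.
move=> t0; apply: (@is_derive_int_oo R aa t t0).
- by move=> y y0; exact: a_cont y0.
- by move=> x x0; exact: a_int x0.
Qed.

Lemma Phi_ge0 (s : R) : 0 <= Phi f eta s.
Proof. by apply: Rintegral_ge0 => y /=; rewrite in_itv /= => /andP[y0 _]; exact: a_ge0. Qed.

Lemma Phi_le (s y : R) : 0 < s -> s <= y -> Phi f eta s <= Phi f eta y.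
Proof.
move=> s0 sy.
have y0 := lt_le_trans s0 sy.
have := @Rintegral_itvB R aa (BRight 0) (BLeft y) s (a_int y0).
rewrite !bnd_simp => /(_ (ltW s0)).
have [<-|sy'] := eqVneq s y; first by [].
have sy2 : s < y by rewrite lt_neqAle sy' sy.
move=> /(_ sy2) E.
rewrite -subr_ge0 /Phi.
rewrite (@Rintegral_itv_bndo_bndc R (BRight 0) s); last first.
  apply: integrableS (a_int y0) => //.
  by move=> z /=; rewrite !in_itv /= => /andP[-> zs]; exact: lt_le_trans zs sy.
rewrite -/aa E; apply: Rintegral_ge0 => z /=; rewrite in_itv /= => /andP[sz _].
exact: a_ge0 (lt_trans s0 sz).
Qed.


Definition hh (y : R) := expR (- Phi f eta y) / (y ^+ 3 * g y).

Lemma h_der {y : R} : 0 < y -> derivable hh y 1.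
Proof.
move=> y0.
have E := isdC (isdN (Phi_der y0)) expR _ (is_derive_expR _).
by have [] := isdM E (isd_der (b_der y0)).
Qed.

Lemma h_cont {y : R} : 0 < y -> {for y, continuous hh}.
Proof. by move=> y0; apply: der_cont; exact: h_der. Qed.

Lemma h_ge0 {y : R} : 0 < y -> 0 <= hh y.
Proof. by move=> y0; rewrite /hh mulr_ge0 ?expR_ge0 // ltW // b_gt0. Qed.

Lemma h_le {y : R} : 0 < y -> hh y <= (y ^+ 3 * g y)^-1.
Proof.
move=> y0; rewrite /hh ler_piMl ?(ltW (b_gt0 y0)) // expR_le1 oppr_le0.
exact: Phi_ge0.
Qed.

Lemma h_int {x : R} : 0 < x -> mu.-integrable `]x, +oo[%classic (EFin \o hh).
Proof.
move=> x0.
apply: le_integrable (b_int x0); first exact: measurable_itv.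
- apply: meas_pos; last by move=> y y0; apply: h_cont.
  by move=> y /=; rewrite in_itv /= andbT => /(lt_trans x0).
- move=> y /=; rewrite in_itv /= andbT => xy.
  have y0 := lt_trans x0 xy.
  rewrite lee_fin ger0_norm; last exact: h_ge0 y0.
  rewrite ger0_norm; last exact: ltW (b_gt0 y0).
  exact: h_le y0.
Qed.

Definition II (s : R) := \int[mu]_(y in `]s, +oo[) hh y.

Lemma I_der {t : R} : 0 < t -> is_derive t 1 II (- hh t).
Proof.
move=> t0; apply: (@is_derive_int_oy R hh t t0).
- by move=> y y0; exact: h_cont y0.
- by move=> x x0; exact: h_int x0.
Qed.

Lemma I_ge0 (s : R) : 0 < s -> 0 <= II s.
Proof.
move=> s0; apply: Rintegral_ge0 => y /=; rewrite in_itv /= andbT => sy.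
exact: h_ge0 (lt_trans s0 sy).
Qed.

Lemma X_eq : xi_eta f eta = (fun s => - s * expR (Phi f eta s) * II s).
Proof. by []. Qed.

Lemma X_der {t : R} : 0 < t -> is_derive t 1 (xi_eta f eta)
  (xi_eta f eta t / t + aa t * xi_eta f eta t + (t ^+ 2 * g t)^-1).
Proof.
move=> t0.
have E := isdC (Phi_der t0) expR _ (is_derive_expR _).
have H := isdM (isdM (isdN (isd_id t)) E) (I_der t0).
rewrite X_eq; apply: (is_derive_eq H).
rewrite /hh /aa expRN.
have gt : g t != 0 by rewrite gt_eqF // gpos.
have tn : t != 0 by rewrite gt_eqF.
have en : expR (Phi f eta t) != 0 by rewrite gt_eqF // expR_gt0.
field.
by rewrite gt ?tn ?en.
Qed.


Lemma J_ge0 (s : R) : 0 < s -> 0 <= \int[mu]_(y in `]s, +oo[) (y ^+ 3 * g y)^-1.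
Proof.
move=> s0; apply: Rintegral_ge0 => y /=; rewrite in_itv /= andbT => sy.
exact: ltW (b_gt0 (lt_trans s0 sy)).
Qed.

Lemma X_le {s : R} : 0 < s -> `|xi_eta f eta s| <= `|xi f s|.
Proof.
move=> s0.
rewrite X_eq /xi !normrM normrN !ger0_norm ?expR_ge0 ?I_ge0 ?J_ge0 ?(ltW s0) //.
rewrite -mulrA ler_pM2l //.
rewrite /II -RintegralZl //; last exact: h_int s0.
apply: le_Rintegral => //.
- apply: (eq_integrable _ _ _ _ (integrableZl _ (expR (Phi f eta s)) (h_int s0))).
  + exact: measurable_itv.
  + by move=> y _.
  + exact: measurable_itv.
- exact: b_int s0.
- move=> y /=; rewrite in_itv /= andbT => sy.
  have y0 := lt_trans s0 sy.
  rewrite /hh mulrA -expRD ler_piMl ?(ltW (b_gt0 y0)) // expR_le1 subr_le0.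
  exact: Phi_le (ltW sy).
Qed.


Lemma ineq_aux {xs xi0 A Dv Lv : R} : `|xs| <= `|xi0| ->
  A = 2 * eta * Dv - (2 * eta * xs + 1) * Lv ->
  `|A| <= 2 * eta * `|Dv| + (1 + 2 * eta * `|xi0|) * `|Lv|.
Proof.
move=> xle ->.
have e0 : 0 <= 2 * eta by rewrite mulr_ge0 // ltW.
apply: (le_trans (ler_normB _ _)).
rewrite normrM (ger0_norm e0) lerD2l normrM ler_wpM2r //.
apply: (le_trans (ler_normD _ _)).
by rewrite normr1 normrM (ger0_norm e0) addrC lerD2l ler_wpM2l.
Qed.

Definition DX (t : R) := xi_eta f eta t / t + aa t * xi_eta f eta t + (t ^+ 2 * g t)^-1.

Lemma dX_near (s : R) : 0 < s -> \near s, DX s = derive1 (xi_eta f eta) s.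
Proof.
move=> s0; near=> t.
have t0 : 0 < t by near: t; exact: lt_nbhsr.
by rewrite (isd_derive1 (X_der t0)).
Unshelve. all: by end_near.
Qed.

Lemma main_sec (s : R) : 0 < s ->
  [/\ `|xi_eta f eta s| <= `|xi f s|,
      derivable (xi_eta f eta) s 1,
      `|derive1 (xi_eta f eta) s| <=
        `|xi f s| / s + (s ^+ 2 * d2 f s)^-1 + 2 * eta * `|xi f s| / (s ^+ 2 * d2 f s),
      derivable (derive1 (xi_eta f eta)) s 1 &
      `|derive1n 2 (xi_eta f eta) s * d2 f s * s ^+ 2| <=
        2 * eta * `|derive1 (xi_eta f eta) s|
        + (1 + 2 * eta * `|xi f s|) * `|derive1 (fun t => ln (d2 f t * t)) s|].
Proof.
move=> s0.
have Xd := X_der s0.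
have sn : s != 0 by rewrite gt_eqF.
have gn : g s != 0 by rewrite gt_eqF // gpos.
have Xl := X_le s0.
have qp := q_gt0 s0.
have snn : (fun t : R => t) s != 0 by [].
have H := isdD (isdD (isdM Xd (isdV snn (isd_id s)))
                     (isdM (isdM (isd_cst (2 * eta) s) (q_der s0)) Xd)) (q_der s0).
have H' := @near_eq_is_derive _ _ _ DX (derive1 (xi_eta f eta)) s 1 _ (dX_near s s0) H.
have gsp : 0 < g s * s by rewrite mulr_gt0 // gpos.
have Hl := isdC (isdM (isd_der (gder s s0)) (isd_id s)) (@ln R) _ (is_derive1_ln gsp).
split.
- exact: Xl.
- by case: Xd.
- rewrite (isd_derive1 Xd).
  apply: (le_trans (ler_normD _ _)).
  rewrite [X in _ <= X]addrAC (ger0_norm (ltW qp)) lerD2r.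
  apply: (le_trans (ler_normD _ _)).
  apply: lerD.
    by rewrite normrM normfV (gtr0_norm s0) ler_pM2r ?invr_gt0.
  rewrite /aa normrM [X in _ <= X]mulrAC ger0_norm; last first.
    by apply: ltW; rewrite ?mulr_gt0.
  by rewrite ler_pM2l // ?mulr_gt0.
- by case: H'.
- rewrite [derive1n 2 _ _]/= (isd_derive1 H') (isd_derive1 Hl).
  apply: (ineq_aux Xl).
  rewrite (isd_derive1 Xd) /aa.
  field.
  by rewrite sn gn.
Qed.

End Main.

Theorem proposition3p1 (R : realType) (f : R -> R) (beta alpha kappa L Kinf : R) :
  0 < alpha < 1 -> 0 < kappa -> 0 < L ->
  hypothesis2 f beta alpha kappa L Kinf ->
  forall eta : R, 0 < eta <= 1 ->
  forall s : R, 0 < s ->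
  [/\ `|xi_eta f eta s| <= `|xi f s|,
      derivable (xi_eta f eta) s 1,
      `|derive1 (xi_eta f eta) s| <=
        `|xi f s| / s + (s ^+ 2 * d2 f s)^-1 + 2 * eta * `|xi f s| / (s ^+ 2 * d2 f s),
      derivable (derive1 (xi_eta f eta)) s 1 &
      `|derive1n 2 (xi_eta f eta) s * d2 f s * s ^+ 2| <=
        2 * eta * `|derive1 (xi_eta f eta) s|
        + (1 + 2 * eta * `|xi f s|) * `|derive1 (fun t => ln (d2 f t * t)) s|].
Proof.
move=> /andP[a0 a1] k0 L0 [[_ [[Cd _] gpos]] gbd _ _] eta /andP[e0 _] s s0.
have c0 : 0 < (alpha * kappa)^-1 by rewrite invr_gt0 mulr_gt0.
have gder : forall y : R, 0 < y -> derivable (d2 f) y 1.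
  by move=> y y0; exact: (Cd 2%N isT y y0).
exact: (@main_sec R f ((alpha * kappa)^-1) alpha eta c0 a0 a1 e0 gpos gder gbd s s0).
Qed.
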